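(* Let $k\ge 3$ be an integer. There is no deterministic wait-free algorithm that solves the consensus task for $2$ processes in the asynchronous shared-memory model using only atomic read-write registers and (any number of) $\text{WRN}_{k}$ objects.
   Context: A $\text{WRN}_{k}$ (Write and Read Next) object is a deterministic atomic shared object with a single operation $\texttt{WRN}(i,v)$, where $i\in\{0,\dots,k-1\}$ and $v\neq\bot$. Its state consists of $k$ values $A[0],\dots,A[k-1]$, initially all $\bot$; the operation $\texttt{WRN}(i,v)$ atomically sets $A[i]\gets v$ and returns $A[(i+1)\bmod k]$ (i.e. the value passed in the most recent previous invocation with index $(i+1)\bmod k$, or $\bot$ if there was none). Model: asynchronous processes communicate only by applying atomic operations (steps) to shared objects; any process may crash (stop taking steps). An algorithm is wait-free if every non-crashed process produces its output in a finite number of its own steps. Consensus task: each process has an input value and every non-faulty process must output a value such that (Validity) every output is the input of some process and (Agreement) all outputs are equal. *)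

(* Defs.v *)
From mathcomp Require Import all_boot.
Set Implicit Arguments. Unset Strict Implicit. Unset Printing Implicit Defensive.

(* Operations a process may apply to a shared object.
   [ORead r] reads register r; [OWrite r v] writes v into register r;
   [OWRN w i v] applies WRN(i, v) to the WRN_k object w (v <> bot is
   automatic: bot is [None], v is an element of V). *)
Inductive op (k : nat) (V R W : Type) : Type :=
| ORead of R
| OWrite of R & V
| OWRN of W & 'I_k & V.

(* Each process is a deterministic state machine: in local state s, process p
   either outputs a value ([inl o]) and stops, or applies an operation
   ([inr o]) and moves to [next p s resp] with the response [resp]. *)
Record algorithm (k : nat) (I : Type) := Algorithm {
  Val : Type;
  Reg : eqType;
  Wobj : eqType;
  reg_init : Reg -> Val;
  Loc : Type;
  init : 'I_2 -> I -> Loc;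
  act : 'I_2 -> Loc -> I + op k Val Reg Wobj;
  next : 'I_2 -> Loc -> option Val -> Loc
}.

Section Semantics.
Variables (k : nat) (I : Type) (A : algorithm k I).

(* shared memory: register contents, and the arrays A[0..k-1] of each WRN_k
   object (indexed by nat, only 0..k-1 used); [None] is bot. *)
Record mem := Mem { regs : Reg A -> Val A; wrns : Wobj A -> nat -> option (Val A) }.

Definition mem0 : mem := Mem (@reg_init _ _ A) (fun _ _ => None).

Definition apply_op (m : mem) (o : op k (Val A) (Reg A) (Wobj A)) : mem * option (Val A) :=
  match o with
  | ORead r => (m, Some (regs m r))
  | OWrite r v => (Mem (fun r' => if r' == r then v else regs m r') (wrns m), None)
  | OWRN w i v =>
      (Mem (regs m) (fun w' j => if (w' == w) && (j == nat_of_ord i) then Some v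
                                 else wrns m w' j),
       wrns m w ((nat_of_ord i).+1 %% k))
  end.

Record config := Config { locs : 'I_2 -> Loc A; cmem : mem }.

Definition init_config (inputs : 'I_2 -> I) : config :=
  Config (fun p => @init _ _ A p (inputs p)) mem0.

Definition step (c : config) (p : 'I_2) : config :=
  match @act _ _ A p (locs c p) with
  | inl _ => c
  | inr o =>
      let (m', resp) := apply_op (cmem c) o in
      Config (fun q => if q == p then @next _ _ A p (locs c p) resp else locs c q) m'
  end.

Fixpoint run (inputs : 'I_2 -> I) (sched : nat -> 'I_2) (t : nat) : config :=
  match t with
  | 0 => init_config inputs
  | t'.+1 => step (run inputs sched t') (sched t')
  end.

Definition decided (c : config) (p : 'I_2) (o : I) : Prop :=
  @act _ _ A p (locs c p) = inl o.

(* A solves 2-process consensus wait-free: in every execution (any inputs,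
   any schedule; a process that crashes is one scheduled only finitely
   often), every process that takes infinitely many steps eventually outputs
   (wait-freedom), all outputs are equal (agreement) and every output is the
   input of some process (validity). *)
Definition solves_consensus : Prop :=
  forall (inputs : 'I_2 -> I) (sched : nat -> 'I_2),
    (forall p : 'I_2, (forall t, exists t', t <= t' /\ sched t' = p) ->
       exists t o, decided (run inputs sched t) p o) /\
    (forall p q t t' o o', decided (run inputs sched t) p o ->
       decided (run inputs sched t') q o' -> o = o') /\
    (forall p t o, decided (run inputs sched t) p o -> exists q, o = inputs q).

End Semantics.

(* Main.v *)
From Stdlib Require Import Classical ClassicalEpsilon FunctionalExtensionality.
Require Import Defs.
From mathcomp Require Import all_boot zify.
Set Implicit Arguments. Unset Strict Implicit. Unset Printing Implicit Defensive.

Section Proof.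
Variables (k : nat) (I : Type) (A : algorithm k I).
Notation cfg := (config A).
Definition exec (c : cfg) (l : seq 'I_2) : cfg := foldl (@step _ _ A) c l.

Lemma mkseqS (T : Type) (s : nat -> T) t : mkseq s t.+1 = rcons (mkseq s t) (s t).
Proof. by rewrite /mkseq -addn1 iotaD map_cat cats1. Qed.

Lemma runE inputs s t : run A inputs s t = exec (init_config A inputs) (mkseq s t).
Proof.
elim: t => [//|t IH].
by rewrite [LHS]/= IH mkseqS /exec -cats1 foldl_cat.
Qed.

Lemma mkseq_ext (l : seq 'I_2) p T :
  mkseq (fun t => nth p l t) (size l + T) = l ++ nseq T p.
Proof.
apply: (@eq_from_nth _ p); first by rewrite size_mkseq size_cat size_nseq.
move=> i; rewrite size_mkseq => Hi; rewrite nth_mkseq // nth_cat.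
case: ltnP => // H; rewrite nth_nseq nth_default //.
by rewrite ltn_subLR // Hi.
Qed.

Lemma stepE (c : cfg) p o : act p (locs c p) = inr o ->
  cmem (step c p) = (apply_op (cmem c) o).1 /\
  locs (step c p) p = @Defs.next _ _ A p (locs c p) (apply_op (cmem c) o).2 /\
  (forall q, q != p -> locs (step c p) q = locs c q).
Proof.
move=> H; rewrite /step H; case: (apply_op _ _) => m r /=.
by rewrite eqxx; split=> //; split=> // q /negbTE ->.
Qed.

Lemma decided_step (c : cfg) p q o : decided c p o -> decided (step c q) p o.
Proof.
rewrite /decided /step => H.
case E: (act q (locs c q)) => [o'|o'] //.
case: (apply_op _ _) => m r /=.
case: eqP => // Epq; by rewrite Epq E in H.
Qed.

Lemma decided_exec (c : cfg) l p o : decided c p o -> decided (exec c l) p o.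
Proof. elim: l c => [//|q l IH] c H /=; exact/IH/decided_step. Qed.

Lemma exec_cat (c : cfg) l1 l2 : exec c (l1 ++ l2) = exec (exec c l1) l2.
Proof. by rewrite /exec foldl_cat. Qed.

Lemma solo_same (c c' : cfg) p n : locs c p = locs c' p -> cmem c = cmem c' ->
  locs (exec c (nseq n p)) p = locs (exec c' (nseq n p)) p /\
  cmem (exec c (nseq n p)) = cmem (exec c' (nseq n p)).
Proof.
elim: n c c' => [|n IH] c c' H1 H2 /=; first by [].
apply: IH; rewrite /step -H1; case: (act _ _) => // o; rewrite -H2;
  case: (apply_op _ _) => m r /=; by rewrite ?eqxx.
Qed.


Lemma modS i : i < k -> i.+1 %% k = if i.+1 == k then 0 else i.+1.
Proof.
move=> Hi; case: eqP => [->|ne]; first by rewrite modnn.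
rewrite modn_small //; rewrite ltn_neqAle Hi andbT; exact/eqP.
Qed.

Hypothesis hk : 3 <= k.

Lemma F1 i : i < k -> i.+1 %% k != i.
Proof. move=> Hi; rewrite modS //; case: ifP => /eqP H; apply/eqP; lia. Qed.

Lemma F2 i j : i < k -> j < k -> i = j.+1 %% k -> i.+1 %% k != j.
Proof.
move=> Hi Hj; rewrite (modS Hi) (modS Hj).
case: ifP => /eqP H1; case: ifP => /eqP H2 H3; apply/eqP; lia.
Qed.

Definition Case (M : Defs.mem A) o o' :=
  ((apply_op (apply_op M o).1 o').1 = (apply_op (apply_op M o').1 o).1 \/
   (apply_op (apply_op M o).1 o').1 = (apply_op M o').1) /\
  (apply_op (apply_op M o).1 o').2 = (apply_op M o').2.

Lemma memE (R1 R2 : Reg A -> Val A) (W1 W2 : Wobj A -> nat -> option (Val A)) :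
  (forall r, R1 r = R2 r) -> (forall w j, W1 w j = W2 w j) -> Defs.Mem R1 W1 = Defs.Mem R2 W2.
Proof.
move=> H1 H2; f_equal; apply: functional_extensionality => x //.
apply: functional_extensionality => y; exact: H2.
Qed.

Lemma case_ops M o o' : Case M o o' \/ Case M o' o.
Proof.
case: o => [r|r v|w i v].
- by left; split; [right|].
- case: o' => [r'|r' v'|w' j v'].
  + by right; split; [right|].
  + left; split=> //.
    case: (eqVneq r' r) => [->|ne].
    * right; apply: memE => // r0 /=; by case: eqP.
    * left; apply: memE => // r0 /=; case: (eqVneq r0 r') => [->|n1]; [by rewrite (negbTE ne) | by case: eqP].
  + by left; split; [left|].
- case: o' => [r'|r' v'|w' j v'].
  + by right; split; [right|].
  + by right; split; [left|].
  + have Hi := ltn_ord i; have Hj := ltn_ord j.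
    case: (eqVneq w' w) => [Ew|nw]; last first.
      left; split; last by rewrite /= (negbTE nw).
      left; apply: memE => // w0 j0 /=.
      case: eqP => [->|]; case: eqP => // ->; by rewrite (negbTE nw).
    subst w'.
    have sw : forall (i0 j0 : nat), i0 != j0 -> forall w0 (j1 : nat),
      ((if (w0 == w) && (j1 == i0) then Some v else if (w0 == w) && (j1 == j0) then Some v' else wrns M w0 j1) =
       (if (w0 == w) && (j1 == j0) then Some v' else if (w0 == w) && (j1 == i0) then Some v else wrns M w0 j1)).
      move=> i0 j0 nij w0 j1; case: (w0 == w) => //=.
      case: (eqVneq j1 i0) => [->|n1] //; by rewrite (negbTE nij).
    case: (eqVneq (nat_of_ord i) (j.+1 %% k)) => [Eij|nij].
    * right; split; last by rewrite /= eqxx /= (negbTE (F2 Hi Hj Eij)).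
      have ij : nat_of_ord i != j by rewrite Eij (F1 Hj).
      left; apply: memE => // w0 j0 /=; by rewrite sw.
    * left; split; last by rewrite /= eqxx /= eq_sym (negbTE nij).
      case: (eqVneq (nat_of_ord j) (nat_of_ord i)) => [Eji|nji].
      - right; apply: memE => // w0 j0 /=; rewrite Eji; by case: ((w0 == w) && (j0 == i)).
      - left; apply: memE => // w0 j0 /=; by rewrite sw // eq_sym.
Qed.


Hypothesis Hsol : solves_consensus A.

Definition ext (l : seq 'I_2) (p : 'I_2) : nat -> 'I_2 := fun t => nth p l t.

Lemma run_ext inputs l p T :
  run A inputs (ext l p) (size l + T) = exec (exec (init_config A inputs) l) (nseq T p).
Proof. by rewrite runE mkseq_ext exec_cat. Qed.

Lemma decided_run inputs s t n p o :
  decided (run A inputs s t) p o -> decided (run A inputs s (n + t)) p o.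
Proof. move=> H; elim: n => [//|n IH]; rewrite addSn /=; exact: decided_step. Qed.

Lemma wf inputs l p : exists n o,
  decided (exec (exec (init_config A inputs) l) (nseq n p)) p o.
Proof.
have [W _] := Hsol inputs (ext l p).
have [|T [o HT]] := W p.
  move=> t; exists (t + size l); split; first exact: leq_addr.
  by rewrite /ext nth_default // leq_addl.
exists T, o; rewrite -run_ext; exact: decided_run.
Qed.

Lemma agree inputs L p q v w : decided (exec (init_config A inputs) L) p v ->
  decided (exec (init_config A inputs) L) q w -> v = w.
Proof.
have [_ [Ag _]] := Hsol inputs (ext L p).
have E := run_ext inputs L p 0; rewrite /= in E.
rewrite -E => H1 H2; exact: Ag H1 H2.
Qed.

Lemma valid inputs L p o : decided (exec (init_config A inputs) L) p o ->
  exists q, o = inputs q.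
Proof.
have [_ [_ V]] := Hsol inputs (ext L p).
have E := run_ext inputs L p 0; rewrite /= in E.
rewrite -E => H; exact: V H.
Qed.

Variables (a b : I).
Hypothesis hab : a <> b.
Definition p0 : 'I_2 := ord0.
Definition p1 : 'I_2 := @Ordinal 2 1 isT.
Lemma I2 (p : 'I_2) : p = p0 \/ p = p1.
Proof. case: p => [[|[|n]] H]; [left|right|by []]; exact: val_inj. Qed.

Definition ab : 'I_2 -> I := fun p => if p == p0 then a else b.
Definition init_ab := init_config A ab.
Definition reach (c : cfg) := exists L, c = exec init_ab L.
Definition val (c : cfg) v := exists l p, decided (exec c l) p v.
Definition biv (c : cfg) := exists v w, v <> w /\ val c v /\ val c w.

Lemma reach_exec c l : reach c -> reach (exec c l).
Proof. by case=> L ->; exists (L ++ l); rewrite exec_cat. Qed.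

Lemma reach_step c p : reach c -> reach (step c p).
Proof. move=> H; exact: (reach_exec [:: p] H). Qed.

Lemma decided_univ c p v w : reach c -> decided c p v -> val c w -> w = v.
Proof.
case=> L -> Hd [l [q Hq]].
have Hd' := decided_exec l Hd; rewrite -exec_cat in Hd' Hq.
exact: agree Hq Hd'.
Qed.

Lemma decided_notbiv c p v : reach c -> decided c p v -> ~ biv c.
Proof.
move=> R Hd [x [y [xy [Vx Vy]]]]; apply: xy.
by rewrite (decided_univ R Hd Vx) (decided_univ R Hd Vy).
Qed.

Lemma wf_reach c p : reach c -> exists n o, decided (exec c (nseq n p)) p o.
Proof. case=> L ->; exact: wf. Qed.

Lemma notbiv_eq c v w : ~ biv c -> val c v -> val c w -> v = w.
Proof.
move=> nb Vv Vw; case: (classic (v = w)) => // ne; case: nb; by exists v, w.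
Qed.

Lemma crit_xy c x y ox oy : x != y -> (forall q, q = x \/ q = y) ->
  act x (locs c x) = inr ox -> act y (locs c y) = inr oy ->
  Case (cmem c) ox oy -> reach c -> biv c ->
  ~ biv (step c x) -> ~ biv (step c y) -> False.
Proof.
move=> xy Hq Ax Ay [Hm Hr] R B nbx nby.
have [Sx1 [Sx2 Sx3]] := stepE Ax.
have [Sy1 [Sy2 Sy3]] := stepE Ay.
have yx : y != x by rewrite eq_sym.
have Ay' : act y (locs (step c x) y) = inr oy by rewrite Sx3.
have Ax' : act x (locs (step c y) x) = inr ox by rewrite Sy3.
have [Sxy1 [Sxy2 _]] := stepE Ay'.
have [Syx1 [_ Syx3]] := stepE Ax'.
have [al [be [Hm' Hl']]] : exists al be,
    cmem (exec (step c x) al) = cmem (exec (step c y) be) /\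
    locs (exec (step c x) al) y = locs (exec (step c y) be) y.
  case: Hm => Hm.
  - exists [:: y], [:: x]; rewrite /= Sxy1 Sx1 Syx1 Sy1 Hm Syx3 // Sxy2 Sy2 Sx3 //.
    by rewrite Sx1 Hr.
  - exists [:: y], [::]; rewrite /= Sxy1 Sx1 Sy1 Hm Sxy2 Sy2 Sx3 //.
    by rewrite Sx1 Hr.
have Rx : reach (exec (step c x) al) by apply/reach_exec/reach_step.
have [n [o Ho]] := wf_reach y Rx.
have [Hs _] := solo_same n Hl' Hm'.
have Vx : val (step c x) o by exists (al ++ nseq n y), y; rewrite exec_cat.
have Vy : val (step c y) o.
  exists (be ++ nseq n y), y; rewrite exec_cat; move: Ho; by rewrite /decided Hs.
have all_o : forall u, val c u -> u = o.
  move=> u [[|q l] [p Hp]].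
  - move: Hp; rewrite /decided /=; case: (Hq p) => ->; [rewrite Ax|rewrite Ay]; by [].
  - have Vq : val (step c q) u by exists l, p.
    case: (Hq q) => Eq; subst q.
    + exact: notbiv_eq nbx Vq Vx.
    + exact: notbiv_eq nby Vq Vy.
case: B => v [w [vw [Vv Vw]]]; apply: vw.
by rewrite (all_o _ Vv) (all_o _ Vw).
Qed.


Lemma crit c : reach c -> biv c -> ~ biv (step c p0) -> ~ biv (step c p1) -> False.
Proof.
move=> R B n0 n1.
have U : forall p, exists o, act p (locs c p) = inr o.
  move=> p; case E: (act p (locs c p)) => [o|o]; last by exists o.
  by case: (decided_notbiv R E B).
have [o0 A0] := U p0; have [o1 A1] := U p1.
case: (case_ops (cmem c) o0 o1) => C.
- exact: (crit_xy (x:=p0) (y:=p1) isT I2 A0 A1 C R B n0 n1).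
- have I2' : forall q, q = p1 \/ q = p0 by move=> q; case: (I2 q); [right|left].
  exact: (crit_xy (x:=p1) (y:=p0) isT I2' A1 A0 C R B n1 n0).
Qed.

Lemma init_biv : biv init_ab.
Proof.
have solo : forall (x : I) p, ab p = x -> val init_ab x.
  move=> x p Ep.
  have [n [o Ho]] := wf (fun _ => x) [::] p.
  have [q Eo] := valid Ho; rewrite /= in Eo; subst o.
  have E1 : locs (init_config A (fun _ => x)) p = locs init_ab p by rewrite /= Ep.
  have [Hs _] := @solo_same (init_config A (fun _ => x)) init_ab p n E1 erefl.
  exists (nseq n p), p; move: Ho; by rewrite /decided /= Hs.
exists a, b; split=> //; split; [exact: (solo _ p0)| exact: (solo _ p1)].
Qed.

Lemma no_consensus : False.
Proof.
have H : forall c, reach c -> biv c -> exists p, biv (step c p).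
  move=> c R B; case: (classic (biv (step c p0))) => [?|n0]; first by exists p0.
  case: (classic (biv (step c p1))) => [?|n1]; first by exists p1.
  exfalso; exact: crit R B n0 n1.
have G : forall c, {p | reach c -> biv c -> biv (step c p)}.
  move=> c; apply: constructive_indefinite_description.
  case: (classic (reach c /\ biv c)) => [[R B]|nr].
    have [p Hp] := H c R B; by exists p.
  by exists p0 => R B; case: nr.
pose g c := sval (G c).
pose F c := step c (g c).
pose cs t := iter t F init_ab.
pose s t := g (cs t).
have Hrun : forall t, run A ab s t = cs t.
  by elim=> //= t ->.
have Inv : forall t, reach (cs t) /\ biv (cs t).
  elim=> [|t [R B]]; first by split; [exists [::] | exact: init_biv].
  split; first exact: reach_step.
  exact: (svalP (G (cs t)) R B).
have [W _] := Hsol ab s.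
have [p Hinf] : exists p, forall t, exists t', t <= t' /\ s t' = p.
  case: (classic (forall t, exists t', t <= t' /\ s t' = p0)) => h; first by exists p0.
  exists p1 => t; apply: NNPP => h2.
  have [t0 h3] := not_all_ex_not _ _ h.
  case: (I2 (s (maxn t t0))) => E.
  - by apply: h3; exists (maxn t t0); rewrite leq_maxr.
  - by apply: h2; exists (maxn t t0); rewrite leq_maxl.
have [T [o HT]] := W p Hinf.
rewrite Hrun in HT; have [R B] := Inv T.
exact: decided_notbiv R HT B.
Qed.

End Proof.

Theorem lemma1 (k : nat) (hk : 3 <= k) (I : Type) (a b : I) (hab : a <> b) :
  ~ exists A : algorithm k I, solves_consensus A.
Proof. by case=> A H; exact: (no_consensus hk H hab). Qed.
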